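(* Let $\beta\in(3/2,\beta^*]$, let $\vec z\in S_\beta$ and let $\vec z=\sum_{i=1}^\infty a_i\beta^{-i}$ with $a_i\in\{\vec q_0,\vec q_1,\vec q_2\}$ be any representation of $\vec z$ in base $\beta$. Then there exists $\omega\in\Omega$ such that $a_i=d_i(\omega,\vec z)$ for all $i\ge1$.
   Context: $\beta^*\approx1.5437$ is the real root of $x^3-2x^2+2x=2$. $\vec q_0=(0,0)$, $\vec q_1=(1,0)$, $\vec q_2=(0,1)$, $f_i(\vec z)=(\vec z+\vec q_i)/\beta$, $S_\beta$ the attractor of this IFS. $H=\{(x,y):x<\frac1\beta,\ y<\frac1\beta,\ x+y>\frac{1}{\beta(\beta-1)}\}$; $\tilde E_0=([0,\frac1\beta)\times[0,\frac1\beta))\setminus H$; $\tilde E_1=\{0\le y<\frac1\beta,\ \frac{1}{\beta(\beta-1)}<x+y\le\frac1{\beta-1}\}\setminus H$; $\tilde E_2=\{0\le x<\frac1\beta,\ \frac{1}{\beta(\beta-1)}<x+y\le\frac1{\beta-1}\}\setminus H$; $\tilde C_{01}=\{x\ge\frac1\beta,\ y\ge0,\ x+y\le\frac{1}{\beta(\beta-1)}\}$; $\tilde C_{12}=\{x\ge\frac1\beta,\ y\ge\frac1\beta,\ x+y\le\frac1{\beta-1}\}$; $\tilde C_{02}=\{x\ge0,\ y\ge\frac1\beta,\ x+y\le\frac{1}{\beta(\beta-1)}\}$. For $\{i,j,k\}=\{0,1,2\}$, $E_i=\bigl(\tilde E_i\cup\bigcup_{n\ge1}f_jf_i^n(H)\cup\bigcup_{n\ge1}f_kf_i^n(H)\bigr)\setminus\bigcup_{n\ge0}f_i^n(H)$;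 for $ij\in\{01,12,02\}$, $C_{ij}=\tilde C_{ij}\setminus\bigl(\bigcup_{n\ge1}f_if_j^n(H)\cup\bigcup_{n\ge1}f_jf_i^n(H)\bigr)$. $\Omega=\{0,1\}^{\mathbb N}$ with left shift $\sigma$. $K_\beta:\Omega\times S_\beta\to\Omega\times S_\beta$: $K_\beta(\omega,\vec z)=(\omega,\beta\vec z-\vec q_i)$ if $\vec z\in E_i$; $(\sigma\omega,\beta\vec z-\vec q_i)$ if $\omega_1=0$, $\vec z\in C_{ij}$; $(\sigma\omega,\beta\vec z-\vec q_j)$ if $\omega_1=1$, $\vec z\in C_{ij}$. The digit $d_1(\omega,\vec z)$ is the vector subtracted, $d_n=d_1\circ K_\beta^{n-1}$. *)

(* Defs.v *)
From Stdlib Require Import Reals Lra ClassicalEpsilon.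
Open Scope R_scope.

Definition point := (R * R)%type.

Inductive digit := D0 | D1 | D2.

Definition q (d : digit) : point :=
  match d with D0 => (0, 0) | D1 => (1, 0) | D2 => (0, 1) end.

Definition f (beta : R) (i : digit) (z : point) : point :=
  ((fst z + fst (q i)) / beta, (snd z + snd (q i)) / beta).

(* a : nat -> digit, with a n standing for a_{n+1};
   z = sum_{i>=1} a_i beta^{-i}, componentwise convergent series. *)
Definition represents (beta : R) (a : nat -> digit) (z : point) : Prop :=
  infinite_sum (fun n => fst (q (a n)) / beta ^ (S n)) (fst z) /\
  infinite_sum (fun n => snd (q (a n)) / beta ^ (S n)) (snd z).

Definition S_beta (beta : R) (z : point) : Prop :=
  exists a, represents beta a z.

Definition H (beta : R) (z : point) : Prop :=
  fst z < 1 / beta /\ snd z < 1 / beta /\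
  fst z + snd z > 1 / (beta * (beta - 1)).

Definition Et (beta : R) (i : digit) (z : point) : Prop :=
  let x := fst z in let y := snd z in
  match i with
  | D0 => (0 <= x < 1 / beta /\ 0 <= y < 1 / beta) /\ ~ H beta z
  | D1 => (0 <= y < 1 / beta /\
           1 / (beta * (beta - 1)) < x + y <= 1 / (beta - 1)) /\ ~ H beta z
  | D2 => (0 <= x < 1 / beta /\
           1 / (beta * (beta - 1)) < x + y <= 1 / (beta - 1)) /\ ~ H beta z
  end.

Definition in_fj_fin_H (beta : R) (j i : digit) (n : nat) (z : point) : Prop :=
  exists h, H beta h /\ z = f beta j (Nat.iter n (f beta i) h).

Definition in_fin_H (beta : R) (i : digit) (n : nat) (z : point) : Prop :=
  exists h, H beta h /\ z = Nat.iter n (f beta i) h.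

Definition E (beta : R) (i : digit) (z : point) : Prop :=
  (Et beta i z \/
   exists j n, j <> i /\ (1 <= n)%nat /\ in_fj_fin_H beta j i n z) /\
  ~ (exists n, in_fin_H beta i n z).

Definition Ct (beta : R) (i j : digit) (z : point) : Prop :=
  let x := fst z in let y := snd z in
  match i, j with
  | D0, D1 => x >= 1 / beta /\ y >= 0 /\ x + y <= 1 / (beta * (beta - 1))
  | D1, D2 => x >= 1 / beta /\ y >= 1 / beta /\ x + y <= 1 / (beta - 1)
  | D0, D2 => x >= 0 /\ y >= 1 / beta /\ x + y <= 1 / (beta * (beta - 1))
  | _, _ => False
  end.

Definition C (beta : R) (i j : digit) (z : point) : Prop :=
  Ct beta i j z /\
  ~ (exists n, (1 <= n)%nat /\ (in_fj_fin_H beta i j n z \/ in_fj_fin_H beta j i n z)).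

(* Omega = {0,1}^N ; omega_1 is (omega 0); false = 0, true = 1 *)
Definition Omega := (nat -> bool).
Definition shift (w : Omega) : Omega := fun n => w (S n).

Definition dec (P : Prop) : bool :=
  if excluded_middle_informative P then true else false.

(* Digit chosen by K_beta at (omega, z), and whether omega is shifted.
   The pieces E_0,E_1,E_2,C_01,C_12,C_02 are tested in this order; the
   final default branch only matters outside their union. *)
Definition kchoice (beta : R) (w : Omega * point) : digit * bool :=
  let (om, z) := w in
  if dec (E beta D0 z) then (D0, false)
  else if dec (E beta D1 z) then (D1, false)
  else if dec (E beta D2 z) then (D2, false)
  else if dec (C beta D0 D1 z) then ((if om 0%nat then D1 else D0), true)
  else if dec (C beta D1 D2 z) then ((if om 0%nat then D2 else D1), true)
  else if dec (C beta D0 D2 z) then ((if om 0%nat then D2 else D0), true)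
  else (D0, false).

Definition K (beta : R) (w : Omega * point) : Omega * point :=
  let (d, s) := kchoice beta w in
  ((if s then shift (fst w) else fst w),
   (beta * fst (snd w) - fst (q d), beta * snd (snd w) - snd (q d))).

(* d n w stands for d_{n+1}(omega, z) = d_1 (K_beta^n (omega, z)) *)
Definition dseq (beta : R) (w : Omega * point) (n : nat) : digit :=
  fst (kchoice beta (Nat.iter n (K beta) w)).

(* Main.v *)
Require Import Defs.
From Stdlib Require Import Reals Lra Lia Psatz FunctionalExtensionality ClassicalEpsilon.
Open Scope R_scope.

Lemma consts beta : 3/2 < beta < 2 ->
  0 < /beta < 1 /\ /beta < /(beta*(beta-1)) < 2 * /beta /\
  /(beta-1) = /beta + /(beta*(beta-1)) /\
  /(beta*(beta-1)) * (1 - /beta) = /beta * /beta.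
Proof.
  intros Hb.
  assert (h1 : 0 < /beta) by (apply Rinv_0_lt_compat; lra).
  assert (h2 : /beta < 1) by (rewrite <- Rinv_1; apply Rinv_lt_contravar; lra).
  split; [lra|]. split; [split|split].
  - apply Rinv_lt_contravar; nra.
  - replace (2 * /beta) with (/(beta/2)) by (field; lra). apply Rinv_lt_contravar; nra.
  - field; lra.
  - field; lra.
Qed.

Definition Pinv (beta : R) (i : digit) (v : point) : Prop :=
  match i with
  | D0 => fst v < 1/beta /\ snd v < 1/beta
  | D1 => snd v < 1/beta /\ fst v + snd v > 1/(beta*(beta-1))
  | D2 => fst v < 1/beta /\ fst v + snd v > 1/(beta*(beta-1))
  end.

Definition Pinv2 (beta : R) (i : digit) (v : point) : Prop :=
  match i with
  | D0 => fst v < 1/beta /\ snd v < 1/beta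
  | D1 => snd v < 1/beta * (1/beta) /\ fst v + snd v > (1/(beta*(beta-1)) + 1) * (1/beta)
  | D2 => fst v < 1/beta * (1/beta) /\ fst v + snd v > (1/(beta*(beta-1)) + 1) * (1/beta)
  end.

Definition Tri (beta : R) (w : point) : Prop :=
  0 <= fst w /\ 0 <= snd w /\ fst w + snd w <= 1 / (beta - 1).

Ltac prep beta Hb :=
  let K := fresh "K" in
  pose proof (consts beta Hb) as K;
  unfold Rdiv in *; rewrite ?Rmult_1_l in *;
  set (B := /beta) in *; set (C := /(beta*(beta-1))) in *; set (D := /(beta-1)) in *.

Lemma f_inj beta i j u v : beta <> 0 -> Defs.f beta i u = Defs.f beta j v ->
  fst u + fst (q i) = fst v + fst (q j) /\ snd u + snd (q i) = snd v + snd (q j).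
Proof.
  intros Hb E. unfold Defs.f in E. injection E as E1 E2.
  split.
  - apply (Rmult_eq_reg_r (/beta)); [exact E1| apply Rinv_neq_0_compat; auto].
  - apply (Rmult_eq_reg_r (/beta)); [exact E2| apply Rinv_neq_0_compat; auto].
Qed.

Lemma Pinv_H beta i h : 3/2 < beta < 2 -> H beta h -> Pinv beta i h.
Proof. intros Hb Hh. unfold H in Hh. destruct i; simpl; lra. Qed.

Lemma Pinv_f beta i v : 3/2 < beta < 2 -> Pinv beta i v -> Pinv beta i (Defs.f beta i v).
Proof.
  intros Hb P. destruct v as [x y]. unfold Pinv, Defs.f in *.
  destruct i; simpl in *; prep beta Hb; nra.
Qed.

Lemma Pinv_iter beta i n h : 3/2 < beta < 2 -> H beta h -> Pinv beta i (Nat.iter n (Defs.f beta i) h).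
Proof.
  intros Hb Hh. induction n; simpl. apply Pinv_H; auto. apply Pinv_f; auto.
Qed.

Lemma Pinv2_f beta i v : 3/2 < beta < 2 -> Pinv beta i v -> Pinv2 beta i (Defs.f beta i v).
Proof.
  intros Hb P. destruct v as [x y]. unfold Pinv, Pinv2, Defs.f in *.
  destruct i; simpl in *; prep beta Hb; nra.
Qed.

Lemma G1 beta d w : 3/2 < beta < 2 -> H beta (Defs.f beta d w) -> Tri beta w -> False.
Proof.
  intros Hb Hh T. destruct w as [x y]. unfold H, Tri, Defs.f in *.
  destruct d; simpl in *; prep beta Hb; nra.
Qed.

Lemma G2 beta i d v w : 3/2 < beta < 2 -> Pinv beta i v -> Tri beta w -> d <> i ->
  Defs.f beta i v = Defs.f beta d w -> False.
Proof.
  intros Hb P T Hd E. apply f_inj in E; [|lra].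
  destruct v as [x y], w as [x' y']. unfold Pinv, Tri in *.
  destruct i, d; simpl in *; try congruence; prep beta Hb; nra.
Qed.

Lemma G3 beta i j k v w : 3/2 < beta < 2 -> Pinv2 beta i v -> Tri beta w ->
  j <> i -> k <> i -> j <> k ->
  Defs.f beta j v = Defs.f beta k w -> False.
Proof.
  intros Hb P T H1 H2 H3 E. apply f_inj in E; [|lra].
  destruct v as [x y], w as [x' y']. unfold Pinv2, Tri in *.
  destruct i, j, k; simpl in *; try congruence; prep beta Hb; nra.
Qed.

Lemma G4 beta i j w : 3/2 < beta < 2 -> Et beta i (Defs.f beta j w) -> Tri beta w -> j <> i -> False.
Proof.
  intros Hb E T Hd. destruct w as [x y]. unfold Et, Tri, Defs.f in *.
  destruct i, j; simpl in *; try congruence; prep beta Hb; nra.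
Qed.

Lemma Geo0 beta w : 3/2 < beta < 2 -> Tri beta w ->
  let z := Defs.f beta D0 w in
  Et beta D0 z \/ Ct beta D0 D1 z \/ (Ct beta D0 D2 z /\ ~ Ct beta D0 D1 z /\ ~ Ct beta D1 D2 z).
Proof.
  intros Hb T. destruct w as [x y]. unfold Et, Ct, H, Tri, Defs.f in *. simpl in *.
  prep beta Hb.
  destruct (Rlt_or_le ((x+0)*B) B); destruct (Rlt_or_le ((y+0)*B) B).
  - left. split; [split; split; nra| intro; nra].
  - right; right. split; [nra|]. split; intro; nra.
  - right; left. nra.
  - right; left. nra.
Qed.

Lemma Geo1 beta w : 3/2 < beta < 2 -> Tri beta w ->
  let z := Defs.f beta D1 w in
  Et beta D1 z \/ Ct beta D0 D1 z \/ (Ct beta D1 D2 z /\ ~ Ct beta D0 D1 z).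
Proof.
  intros Hb T. destruct w as [x y]. unfold Et, Ct, H, Tri, Defs.f in *. simpl in *.
  prep beta Hb.
  destruct (Rlt_or_le ((y+0)*B) B); destruct (Rlt_or_le C ((x+1)*B + (y+0)*B)).
  - left. split; [split; split; nra| intro; nra].
  - right; left. nra.
  - right; right. split; [nra|]. intro; nra.
  - right; right. split; [nra|]. intro; nra.
Qed.

Lemma Geo2 beta w : 3/2 < beta < 2 -> Tri beta w ->
  let z := Defs.f beta D2 w in
  Et beta D2 z \/ (Ct beta D1 D2 z /\ ~ Ct beta D0 D1 z) \/
  (Ct beta D0 D2 z /\ ~ Ct beta D0 D1 z /\ ~ Ct beta D1 D2 z).
Proof.
  intros Hb T. destruct w as [x y]. unfold Et, Ct, H, Tri, Defs.f in *. simpl in *.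
  prep beta Hb.
  destruct (Rlt_or_le ((x+0)*B) B); destruct (Rlt_or_le C ((x+0)*B + (y+1)*B)).
  - left. split; [split; split; nra| intro; nra].
  - right; right. split; [nra|]. split; intro; nra.
  - right; left. split; [nra|]. intro; nra.
  - right; left. split; [nra|]. intro; nra.
Qed.

Lemma isum_le (s1 s2 : nat -> R) l1 l2 M :
  infinite_sum s1 l1 -> infinite_sum s2 l2 ->
  (forall N, sum_f_R0 s1 N + sum_f_R0 s2 N <= M) -> l1 + l2 <= M.
Proof.
  intros H1 H2 HM. destruct (Rle_or_lt (l1 + l2) M) as [h|h]; auto.
  exfalso. set (e := (l1 + l2 - M) / 2).
  assert (he : e > 0) by (unfold e; lra).
  destruct (H1 e he) as [N1 HN1]. destruct (H2 e he) as [N2 HN2].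
  specialize (HN1 (max N1 N2) ltac:(lia)). specialize (HN2 (max N1 N2) ltac:(lia)).
  specialize (HM (max N1 N2)). unfold Rdist in *.
  apply Rabs_def2 in HN1. apply Rabs_def2 in HN2. unfold e in *. lra.
Qed.

Lemma isum_ge (s : nat -> R) l M :
  infinite_sum s l -> (forall N, M <= sum_f_R0 s N) -> M <= l.
Proof.
  intros H1 HM. destruct (Rle_or_lt M l) as [h|h]; auto.
  exfalso. set (e := (M - l)).
  assert (he : e > 0) by (unfold e; lra).
  destruct (H1 e he) as [N1 HN1].
  specialize (HN1 N1 ltac:(lia)). specialize (HM N1). unfold Rdist in *.
  apply Rabs_def2 in HN1. unfold e in *. lra.
Qed.

Lemma pow_pos' b n : 1 < b -> 0 < b ^ n.
Proof. intros; apply pow_lt; lra. Qed.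

Lemma qb d : 0 <= fst (q d) /\ 0 <= snd (q d) /\ fst (q d) + snd (q d) <= 1.
Proof. destruct d; simpl; lra. Qed.

Lemma divnn c p : 0 <= c -> 0 < p -> 0 <= c / p.
Proof. intros; unfold Rdiv; apply Rmult_le_pos; [lra|left; apply Rinv_0_lt_compat; lra]. Qed.

Lemma S_tri beta a z : 1 < beta -> represents beta a z -> Tri beta z.
Proof.
  intros Hb [Hx Hy]. split; [|split].
  - apply (isum_ge _ _ 0 Hx). intro N. induction N; [simpl sum_f_R0 | rewrite tech5].
    + destruct (qb (a 0%nat)) as [h1 [h2 h3]]. apply divnn; auto; simpl; lra.
    + destruct (qb (a (S N))) as [h1 [h2 h3]].
      assert (0 <= fst (q (a (S N))) / beta ^ S (S N)) by (apply divnn; auto; pose proof (pow_pos' beta (S (S N)) Hb); simpl in *; lra).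
      lra.
  - apply (isum_ge _ _ 0 Hy). intro N. induction N; [simpl sum_f_R0 | rewrite tech5].
    + destruct (qb (a 0%nat)) as [h1 [h2 h3]]. apply divnn; auto; simpl; lra.
    + destruct (qb (a (S N))) as [h1 [h2 h3]].
      assert (0 <= snd (q (a (S N))) / beta ^ S (S N)) by (apply divnn; auto; pose proof (pow_pos' beta (S (S N)) Hb); simpl in *; lra).
      lra.
  - apply (isum_le _ _ _ _ _ Hx Hy). intro N.
    rewrite <- sum_plus.
    assert (forall N, sum_f_R0 (fun l => fst (q (a l)) / beta ^ S l + snd (q (a l)) / beta ^ S l) N
        <= 1 / (beta - 1) - 1 / ((beta - 1) * beta ^ S N)).
    { clear N. intro N. induction N.
      - cbv beta iota delta [sum_f_R0].
        assert (fst (q (a 0%nat)) / beta^1 + snd (q (a 0%nat)) / beta^1 <= 1/beta^1).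
        { destruct (qb (a 0%nat)) as [h1 [h2 h3]]. 
          replace (fst (q (a 0%nat)) / beta^1 + snd (q (a 0%nat)) / beta^1) with
            ((fst (q (a 0%nat)) + snd (q (a 0%nat))) / beta^1) by (field; simpl; lra).
          unfold Rdiv. apply Rmult_le_compat_r; [left; apply Rinv_0_lt_compat; simpl; lra| lra]. }
        assert (1/beta^1 = 1 / (beta - 1) - 1 / ((beta - 1) * beta^1)) by (simpl; field; lra).
        lra.
      - rewrite tech5.
        pose proof (pow_pos' beta (S (S N)) Hb).
        assert (fst (q (a (S N))) / beta ^ S (S N) + snd (q (a (S N))) / beta ^ S (S N)
                 <= 1 / beta ^ S (S N)).
        { destruct (qb (a (S N))) as [h1 [h2 h3]].
          replace (fst (q (a (S N))) / beta ^ S (S N) + snd (q (a (S N))) / beta ^ S (S N)) with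
            ((fst (q (a (S N))) + snd (q (a (S N)))) / beta ^ S (S N)) by (field; lra).
          unfold Rdiv. apply Rmult_le_compat_r; [left; apply Rinv_0_lt_compat; lra| lra]. }
        assert (1 / (beta - 1) - 1 / ((beta - 1) * beta ^ S N) + 1 / beta ^ S (S N)
                = 1 / (beta - 1) - 1 / ((beta - 1) * beta ^ S (S N))).
        { simpl. field. pose proof (pow_pos' beta N Hb). split; [|split]; try lra; nra. }
        lra. }
    specialize (H N).
    assert (0 < 1 / ((beta - 1) * beta ^ S N)).
    { pose proof (pow_pos' beta (S N) Hb). apply Rdiv_lt_0_compat; nra. }
    lra.
Qed.

Lemma isum_shift (t : nat -> R) l beta : beta <> 0 ->
  infinite_sum t l -> infinite_sum (fun n => beta * t (S n)) (beta * (l - t 0%nat)).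
Proof.
  intros Hb H eps He.
  assert (Hab : 0 < Rabs beta) by (apply Rabs_pos_lt; auto).
  destruct (H (eps / Rabs beta)) as [N HN].
  { apply Rdiv_lt_0_compat; lra. }
  exists N. intros n Hn.
  assert (Hs : forall n, sum_f_R0 (fun n => beta * t (S n)) n = beta * (sum_f_R0 t (S n) - t 0%nat)).
  { clear. induction n; simpl; [ring|]. rewrite IHn. simpl. ring. }
  rewrite Hs. unfold Rdist.
  replace (beta * (sum_f_R0 t (S n) - t 0%nat) - beta * (l - t 0%nat))
    with (beta * (sum_f_R0 t (S n) - l)) by ring.
  rewrite Rabs_mult. specialize (HN (S n) ltac:(lia)). unfold Rdist in HN.
  apply (Rmult_lt_compat_l (Rabs beta)) in HN; auto.
  replace (Rabs beta * (eps / Rabs beta)) with eps in HN by (field; lra). lra.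
Qed.

Definition Tstep (beta : R) (d : digit) (z : point) : point :=
  (beta * fst z - fst (q d), beta * snd z - snd (q d)).

Lemma S_shift beta a z : 1 < beta -> represents beta a z ->
  represents beta (fun n => a (S n)) (Tstep beta (a 0%nat) z).
Proof.
  intros Hb [Hx Hy]. unfold Tstep. split; cbn [fst snd].
  - apply isum_shift with (beta := beta) in Hx; [|lra].
    replace (beta * fst z - fst (q (a 0%nat))) with
      (beta * (fst z - fst (q (a 0%nat)) / beta ^ 1)) by (simpl; field; lra).
    intros eps He. destruct (Hx eps He) as [N HN]. exists N. intros n Hn.
    specialize (HN n Hn).
    rewrite (sum_eq (fun n0 => fst (q (a (S n0))) / beta ^ S n0)
      (fun n0 => beta * (fst (q (a (S n0))) / beta ^ S (S n0))) n); [exact HN|].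
    intros i _. simpl. field. split; [|lra]. apply pow_nonzero; lra.
  - apply isum_shift with (beta := beta) in Hy; [|lra].
    replace (beta * snd z - snd (q (a 0%nat))) with
      (beta * (snd z - snd (q (a 0%nat)) / beta ^ 1)) by (simpl; field; lra).
    intros eps He. destruct (Hy eps He) as [N HN]. exists N. intros n Hn.
    specialize (HN n Hn).
    rewrite (sum_eq (fun n0 => snd (q (a (S n0))) / beta ^ S n0)
      (fun n0 => beta * (snd (q (a (S n0))) / beta ^ S (S n0))) n); [exact HN|].
    intros i _. simpl. field. split; [|lra]. apply pow_nonzero; lra.
Qed.

Lemma f_Tstep beta d z : beta <> 0 -> Defs.f beta d (Tstep beta d z) = z.
Proof.
  intros Hb. unfold Defs.f, Tstep. destruct z as [x y]; simpl. f_equal; field; auto.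
Qed.

Lemma digit_dec (x y : digit) : {x = y} + {x <> y}.
Proof. decide equality. Qed.

Lemma pt_eq (u v : point) : fst u = fst v -> snd u = snd v -> u = v.
Proof. destruct u, v; simpl; congruence. Qed.

Lemma S_decomp beta u : 3/2 < beta < 2 -> S_beta beta u ->
  exists d w, S_beta beta w /\ Tri beta w /\ u = Defs.f beta d w.
Proof.
  intros Hb [a Ha]. exists (a 0%nat), (Tstep beta (a 0%nat) u).
  pose proof (S_shift beta a u ltac:(lra) Ha) as Hs.
  split; [eexists; exact Hs|]. split; [eapply S_tri; [lra|exact Hs]|].
  symmetry. apply f_Tstep. lra.
Qed.

Lemma f_same beta i u v : 3/2 < beta < 2 -> Defs.f beta i u = Defs.f beta i v -> u = v.
Proof.
  intros Hb E. apply f_inj in E; [|lra]. destruct E. apply pt_eq; lra.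
Qed.

Lemma F2 beta i n : 3/2 < beta < 2 -> forall u, S_beta beta u -> ~ in_fin_H beta i n u.
Proof.
  intros Hb. induction n; intros u Su [h [Hh Eu]];
  destruct (S_decomp beta u Hb Su) as [d [w [Sw [Tw Ew]]]].
  - simpl in Eu. subst u. rewrite Ew in Hh. exact (G1 beta d w Hb Hh Tw).
  - simpl in Eu. destruct (digit_dec d i) as [e|e].
    + subst d. rewrite Eu in Ew. apply f_same in Ew; auto.
      apply (IHn w Sw). exists h. split; auto.
    + apply (G2 beta i d (Nat.iter n (Defs.f beta i) h) w Hb); auto.
      apply Pinv_iter; auto. congruence.
Qed.

Lemma NotE beta i j z w : 3/2 < beta < 2 -> S_beta beta z -> S_beta beta w ->
  z = Defs.f beta j w -> E beta i z -> j = i.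
Proof.
  intros Hb Sz Sw Ez [[Het | [j' [n [Hj' [Hn [h [Hh Eh]]]]]]] Hnot];
  destruct (digit_dec j i) as [e|e]; auto; exfalso.
  - subst z. apply (G4 beta i j w Hb Het); auto.
    destruct Sw as [a Ha]. eapply S_tri; [lra|exact Ha].
  - assert (Tw : Tri beta w) by (destruct Sw as [a Ha]; eapply S_tri; [lra|exact Ha]).
    destruct (digit_dec j' j) as [e'|e'].
    + subst j'. rewrite Ez in Eh. apply f_same in Eh; auto.
      apply (F2 beta i n Hb w Sw). exists h; auto.
    + destruct n as [|m]; [lia|].
      apply (G3 beta i j' j (Nat.iter (S m) (Defs.f beta i) h) w Hb); auto.
      * simpl. apply Pinv2_f; auto. apply Pinv_iter; auto.
      * congruence.
Qed.

Lemma S_Tri beta w : 3/2 < beta < 2 -> S_beta beta w -> Tri beta w.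
Proof. intros Hb [a Ha]. eapply S_tri; [lra|exact Ha]. Qed.

Lemma Et_E beta i z : 3/2 < beta < 2 -> S_beta beta z -> Et beta i z -> E beta i z.
Proof.
  intros Hb Sz He. split; [left; auto|]. intros [n Hn]. exact (F2 beta i n Hb z Sz Hn).
Qed.

Lemma fj_E beta i j n z : 3/2 < beta < 2 -> S_beta beta z -> j <> i -> (1 <= n)%nat ->
  in_fj_fin_H beta j i n z -> E beta i z.
Proof.
  intros Hb Sz Hj Hn He. split; [right; exists j, n; auto|].
  intros [m Hm]. exact (F2 beta i m Hb z Sz Hm).
Qed.

Lemma Cfull beta i j d z w : 3/2 < beta < 2 -> Ct beta i j z -> (forall y, ~ E beta y z) ->
  z = Defs.f beta d w -> S_beta beta z -> S_beta beta w -> i <> j -> Defs.C beta i j z.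
Proof.
  intros Hb Hc HE Ez Sz Sw Hij. split; auto.
  assert (X : forall x y n, x <> y -> (1 <= n)%nat -> in_fj_fin_H beta x y n z -> False).
  { intros x y n Hxy Hn Hin. destruct (digit_dec x d) as [e|e].
    - subst x. destruct Hin as [h [Hh Eh]]. rewrite Ez in Eh. apply f_same in Eh; auto.
      apply (F2 beta y n Hb w Sw). exists h; auto.
    - apply (HE y). apply (fj_E beta y x n z); auto. }
  intros [n [Hn [Hin|Hin]]]; [exact (X i j n Hij Hn Hin)|exact (X j i n (not_eq_sym Hij) Hn Hin)].
Qed.

Lemma Cover beta d z w : 3/2 < beta < 2 -> S_beta beta z -> S_beta beta w ->
  z = Defs.f beta d w -> (forall y, ~ E beta y z) ->
  (Defs.C beta D0 D1 z /\ (d = D0 \/ d = D1)) \/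
  (Defs.C beta D1 D2 z /\ ~ Defs.C beta D0 D1 z /\ (d = D1 \/ d = D2)) \/
  (Defs.C beta D0 D2 z /\ ~ Defs.C beta D0 D1 z /\ ~ Defs.C beta D1 D2 z /\ (d = D0 \/ d = D2)).
Proof.
  intros Hb Sz Sw Ez HE.
  pose proof (S_Tri beta w Hb Sw) as Tw.
  assert (nC : forall i j, ~ Ct beta i j z -> ~ Defs.C beta i j z) by (intros i j h [h' _]; auto).
  destruct d.
  - destruct (Geo0 beta w Hb Tw) as [h|[h|[h1 [h2 h3]]]]; rewrite <- Ez in h || rewrite <- Ez in h1, h2, h3.
    + exfalso. apply (HE D0). apply Et_E; auto.
    + left. split; auto. eapply Cfull; eauto. discriminate.
    + right; right. split; [eapply Cfull; eauto; discriminate|]. auto.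
  - destruct (Geo1 beta w Hb Tw) as [h|[h|[h1 h2]]]; rewrite <- Ez in h || rewrite <- Ez in h1, h2.
    + exfalso. apply (HE D1). apply Et_E; auto.
    + left. split; auto. eapply Cfull; eauto. discriminate.
    + right; left. split; [eapply Cfull; eauto; discriminate|]. auto.
  - destruct (Geo2 beta w Hb Tw) as [h|[[h1 h2]|[h1 [h2 h3]]]];
      rewrite <- Ez in h || rewrite <- Ez in h1, h2, h3 || rewrite <- Ez in h1, h2.
    + exfalso. apply (HE D2). apply Et_E; auto.
    + right; left. split; [eapply Cfull; eauto; discriminate|]. auto.
    + right; right. split; [eapply Cfull; eauto; discriminate|]. auto.
Qed.

Lemma dec_t (P : Prop) : dec P = true -> P.
Proof. unfold dec. destruct (excluded_middle_informative P); auto; discriminate. Qed.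
Lemma dec_f (P : Prop) : dec P = false -> ~ P.
Proof. unfold dec. destruct (excluded_middle_informative P); auto; discriminate. Qed.
Lemma dec_P (P : Prop) : P -> dec P = true.
Proof. unfold dec. destruct (excluded_middle_informative P); tauto. Qed.

Definition bitof beta (d : digit) (z : point) : bool :=
  match d with D0 => false | D1 => dec (Defs.C beta D0 D1 z) | D2 => true end.

Lemma snd_kchoice beta om om' z : snd (kchoice beta (om, z)) = snd (kchoice beta (om', z)).
Proof.
  unfold kchoice.
  destruct (dec (E beta D0 z)), (dec (E beta D1 z)), (dec (E beta D2 z)),
    (dec (Defs.C beta D0 D1 z)), (dec (Defs.C beta D1 D2 z)), (dec (Defs.C beta D0 D2 z));
  reflexivity.
Qed.

Ltac cdec := exfalso; match goal with
  | h : ?P, e : dec ?P = false |- _ => exact (dec_f _ e h)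
  | h : ~ ?P, e : dec ?P = true |- _ => exact (h (dec_t _ e))
  end.

Lemma Key beta d z w om : 3/2 < beta < 2 -> S_beta beta z -> S_beta beta w ->
  z = Defs.f beta d w ->
  (snd (kchoice beta (om, z)) = true -> om 0%nat = bitof beta d z) ->
  fst (kchoice beta (om, z)) = d.
Proof.
  intros Hb Sz Sw Ez.
  assert (HC := fun HE => Cover beta d z w Hb Sz Sw Ez HE).
  assert (HN := fun i => NotE beta i d z w Hb Sz Sw Ez).
  unfold kchoice, bitof.
  destruct (dec (E beta D0 z)) eqn:e0; [intros _; symmetry; apply HN, dec_t; auto|].
  destruct (dec (E beta D1 z)) eqn:e1; [intros _; symmetry; apply HN, dec_t; auto|].
  destruct (dec (E beta D2 z)) eqn:e2; [intros _; symmetry; apply HN, dec_t; auto|].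
  assert (HE : forall y, ~ E beta y z) by (intros []; apply dec_f; auto).
  specialize (HC HE).
  destruct (dec (Defs.C beta D0 D1 z)) eqn:c01; simpl; intros Hom.
  - specialize (Hom eq_refl).
    destruct HC as [[_ [-> | ->]]|[[_ [h _]]|[_ [h _]]]]; try cdec.
    + rewrite Hom. reflexivity.
    + rewrite Hom. reflexivity.
  - destruct (dec (Defs.C beta D1 D2 z)) eqn:c12; simpl in *.
    + specialize (Hom eq_refl).
      destruct HC as [[h _]|[[_ [_ [-> | ->]]]|[_ [_ [h _]]]]]; try cdec.
      * rewrite Hom. reflexivity.
      * rewrite Hom. reflexivity.
    + destruct (dec (Defs.C beta D0 D2 z)) eqn:c02; simpl in *.
      * specialize (Hom eq_refl).
        destruct HC as [[h _]|[[h _]|[_ [_ [_ [-> | ->]]]]]];try cdec.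
        -- rewrite Hom. reflexivity.
        -- rewrite Hom. reflexivity.
      * exfalso. destruct HC as [[h _]|[[h _]|[h _]]].
        -- apply (dec_f _ c01) in h; auto.
        -- apply (dec_f _ c12) in h; auto.
        -- apply (dec_f _ c02) in h; auto.
Qed.

Fixpoint zs beta (a : nat -> digit) (z : point) (n : nat) : point :=
  match n with O => z | S m => Tstep beta (a m) (zs beta a z m) end.

Lemma rep_zs beta a z : 3/2 < beta < 2 -> represents beta a z ->
  forall n, represents beta (fun k => a (n + k)%nat) (zs beta a z n).
Proof.
  intros Hb Ha. induction n; [exact Ha|].
  pose proof (S_shift beta _ _ ltac:(lra) IHn) as Hs. simpl in Hs.
  rewrite Nat.add_0_r in Hs. simpl.
  replace (fun k => a (S (n + k))) with (fun n0 => a (n + S n0)%nat); [exact Hs|].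
  apply functional_extensionality. intro k. f_equal. lia.
Qed.

Definition sflag beta (z : point) : bool := snd (kchoice beta ((fun _ => false), z)).

Fixpoint gcnt beta a z (n : nat) : nat :=
  match n with O => O | S m => (gcnt beta a z m + (if sflag beta (zs beta a z m) then 1 else 0))%nat end.

Lemma gcnt_mono beta a z m k : (gcnt beta a z m <= gcnt beta a z (m + k))%nat.
Proof. induction k; [rewrite Nat.add_0_r; lia|]. rewrite Nat.add_succ_r. simpl. lia. Qed.

Lemma gcnt_strict beta a z n n' : (n < n')%nat -> sflag beta (zs beta a z n) = true ->
  (gcnt beta a z n < gcnt beta a z n')%nat.
Proof.
  intros Hl Hf. pose proof (gcnt_mono beta a z (S n) (n' - S n)) as H0.
  replace (S n + (n' - S n))%nat with n' in H0 by lia. simpl in H0. rewrite Hf in H0. lia.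
Qed.

Definition omega_of beta a z (m : nat) : bool :=
  match excluded_middle_informative
          (exists n, sflag beta (zs beta a z n) = true /\ gcnt beta a z n = m) with
  | left e => let n := proj1_sig (constructive_indefinite_description _ e) in
              bitof beta (a n) (zs beta a z n)
  | right _ => false
  end.

Lemma omega_spec beta a z n : sflag beta (zs beta a z n) = true ->
  omega_of beta a z (gcnt beta a z n) = bitof beta (a n) (zs beta a z n).
Proof.
  intros Hf. unfold omega_of.
  destruct (excluded_middle_informative _) as [e|e].
  - destruct (constructive_indefinite_description _ e) as [n' [Hf' Hg]]. simpl.
    assert (n' = n).
    { destruct (Nat.lt_total n' n) as [l|[l|l]]; auto.
      - pose proof (gcnt_strict beta a z n' n l Hf'). lia.
      - pose proof (gcnt_strict beta a z n n' l Hf). lia. }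
    subst; reflexivity.
  - exfalso. apply e. exists n. auto.
Qed.

Theorem main_thm (beta : R) (Hb : 3/2 < beta < 2) (z : point) (a : nat -> digit)
  (Ha : represents beta a z) :
  exists omega : Omega, forall n : nat, a n = dseq beta (omega, z) n.
Proof.
  set (om := omega_of beta a z).
  assert (Szn : forall n, S_beta beta (zs beta a z n)).
  { intro n. eexists. apply rep_zs; eauto. }
  assert (Ezn : forall n, zs beta a z n = Defs.f beta (a n) (zs beta a z (S n))).
  { intro n. simpl. symmetry. apply f_Tstep. lra. }
  assert (KeyN : forall n, fst (kchoice beta ((fun k => om (gcnt beta a z n + k)%nat), zs beta a z n)) = a n).
  { intro n. apply (Key beta (a n) _ (zs beta a z (S n))); auto.
    intro Hs. rewrite Nat.add_0_r. apply omega_spec.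
    unfold sflag. rewrite <- Hs. apply snd_kchoice. }
  assert (Inv : forall n, Nat.iter n (K beta) (om, z) = ((fun k => om (gcnt beta a z n + k)%nat), zs beta a z n)).
  { induction n; [reflexivity|].
    simpl Nat.iter. rewrite IHn. unfold K.
    assert (Ek : kchoice beta ((fun k => om (gcnt beta a z n + k)%nat), zs beta a z n)
                 = (a n, sflag beta (zs beta a z n))).
    { rewrite <- (KeyN n). unfold sflag.
      rewrite (snd_kchoice beta (fun _ => false) (fun k => om (gcnt beta a z n + k)%nat)).
      destruct (kchoice _ _); reflexivity. }
    rewrite Ek. simpl. destruct (sflag beta (zs beta a z n)); f_equal.
    - unfold shift. apply functional_extensionality. intro k. f_equal. lia.
    - apply functional_extensionality. intro k. f_equal. lia. }
  exists om. intro n. unfold dseq. rewrite Inv. symmetry. apply KeyN.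
Qed.

Theorem theorem6p6 (beta beta_star : R)
  (Hstar : beta_star ^ 3 - 2 * beta_star ^ 2 + 2 * beta_star = 2)
  (Hlo : 3 / 2 < beta) (Hhi : beta <= beta_star)
  (z : point) (Hz : S_beta beta z)
  (a : nat -> digit) (Ha : represents beta a z) :
  exists omega : Omega, forall n : nat, a n = dseq beta (omega, z) n.
Proof.
  assert (beta_star < 2).
  { destruct (Rlt_or_le beta_star 2); auto.
    assert ((beta_star - 2) * (beta_star ^ 2 + 2) >= 0).
    { apply Rle_ge, Rmult_le_pos; [lra|]. pose proof (pow2_ge_0 beta_star). lra. }
    exfalso. assert ((beta_star - 2) * (beta_star ^ 2 + 2) = beta_star ^ 3 - 2 * beta_star ^ 2 + 2 * beta_star - 4) by ring. lra. }
  apply main_thm; auto. lra.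
Qed.
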